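(* Let $\mathbb{X}$ be a reflexive Banach space and $\mathbb{Y}$ any Banach space. Let $T\in\mathbb{L}(\mathbb{X},\mathbb{Y})$ with $\|T\|=1$, suppose $\mathbb{K}(\mathbb{X},\mathbb{Y})$ is an $M$-ideal of $\mathbb{L}(\mathbb{X},\mathbb{Y})$ and $\operatorname{dist}(T,\mathbb{K}(\mathbb{X},\mathbb{Y}))<1$. Suppose $\{x_1,\dots,x_r\}$ is a maximal linearly independent subset of $M_T\cap\operatorname{Ext}(B_{\mathbb{X}})$ and that $Tx_i$ is $m_i$-smooth for $1\le i\le r$. Then $\dim\operatorname{span}J(T)\ge\sum_{i=1}^r m_i$.
   Context: $\mathbb{L}(\mathbb{X},\mathbb{Y})$ (resp. $\mathbb{K}(\mathbb{X},\mathbb{Y})$): bounded (resp. compact) linear operators with operator norm. $M$-ideal: a closed subspace $\mathbb{V}$ of $\mathbb{Z}$ with $\mathbb{Z}^*=\mathbb{V}^*\oplus_1\mathbb{V}^\perp$ (unique decomposition $z^*=z_1^*+z_2^*$, $z_2^*\in\mathbb{V}^\perp$, $\|z^*\|=\|z_1^*\|+\|z_2^*\|$). $B_{\mathbb{X}}$ is the closed unit ball, $\operatorname{Ext}(C)$ the extreme points of a convex set $C$, $M_T=\{x:\|x\|=1,\|Tx\|=\|T\|\}$. For a unit vector $z$ of a Banach space $\mathbb{Z}$, $J(z)=\{f\in\mathbb{Z}^*:\|f\|=1,f(z)=1\}$, and $z$ is $k$-smooth if $\dim\operatorname{span}J(z)=k$ (this applies also to $T$ as a unit vector of $\mathbb{L}(\mathbb{X},\mathbb{Y})$).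 *)

(* Defs.v *)
From HB Require Import structures.
From mathcomp Require Import all_boot all_order all_algebra.
From mathcomp Require Import all_classical all_reals all_analysis.
Set Implicit Arguments. Unset Strict Implicit. Unset Printing Implicit Defensive.
Import Order.TTheory GRing.Theory Num.Theory.
Import numFieldNormedType.Exports.
Local Open Scope classical_set_scope.
Local Open Scope ring_scope.

Section LinAlg.
Context {R : realType} {W : lmodType R}.

Definition bs_lin_indep (n : nat) (x : 'I_n -> W) : Prop :=
  forall c : 'I_n -> R, \sum_(i < n) c i *: x i = 0 -> forall i, c i = 0.

Definition bs_span (S : set W) : set W :=
  [set w | exists n (c : 'I_n -> R) (x : 'I_n -> W),
      (forall i, S (x i)) /\ w = \sum_(i < n) c i *: x i].

Definition bs_dim_span_ge (S : set W) (k : nat) : Prop :=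
  exists x : 'I_k -> W, (forall i, bs_span S (x i)) /\ bs_lin_indep x.

Definition bs_dim_span_eq (S : set W) (k : nat) : Prop :=
  bs_dim_span_ge S k /\ ~ bs_dim_span_ge S k.+1.

Definition bs_ext (C : set W) : set W :=
  [set z | C z /\ forall a b (t : R), C a -> C b -> 0 < t < 1 ->
                  z = t *: a + (1 - t) *: b -> a = b].

Definition bs_subspace (S : set W) : Prop :=
  S 0 /\ forall (a : R) u v, S u -> S v -> S (a *: u + v).

Definition bs_extend (n : nat) (x : 'I_n -> W) (y : W) : 'I_n.+1 -> W :=
  fun i => match unlift ord_max i with Some j => x j | None => y end.
End LinAlg.

(* A normed space presented as a linear bs_subspace D of an lmodType V,
   equipped with the norm N (only its values on D matter). *)
Section NormedSub.
Context {R : realType} {V : lmodType R}.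
Variables (D : set V) (N : V -> R).

(* continuous linear functionals on (D, N); normalized to vanish off D so
   that functionals are determined by their values on D *)
Definition bs_dual_set : set (V -> R) :=
  [set f | (forall (a : R) u v, D u -> D v -> f (a *: u + v) = a * f u + f v)
        /\ (exists M : R, forall v, D v -> `|f v| <= M * N v)
        /\ (forall v, ~ D v -> f v = 0)].

Definition bs_dual_norm (f : V -> R) : R :=
  sup [set r : R | exists v, [/\ D v, N v <= 1 & r = `|f v|]].

Definition bs_Jset (z : V) : set (V -> R) :=
  [set f | bs_dual_set f /\ bs_dual_norm f = 1 /\ f z = 1].

Definition bs_k_smooth (z : V) (k : nat) : Prop :=
  D z /\ N z = 1 /\ bs_dim_span_eq (bs_Jset z) k.

Definition bs_dist_to (z : V) (S : set V) : R :=
  inf [set r : R | exists v, S v /\ r = N (z - v)].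

(* M-ideal: S is a closed bs_subspace of (D,N), and the dual splits as
   Z^* = W (+)_1 S^perp for some bs_subspace W of Z^* *)
Definition bs_M_ideal (S : set V) : Prop :=
  [/\ bs_subspace S, S `<=` D,
      (forall z, D z -> (forall e : R, 0 < e -> exists v, S v /\ N (z - v) < e) -> S z)
    & let perp := [set f | bs_dual_set f /\ forall v, S v -> f v = 0] in
      exists Wd : set (V -> R),
       [/\ bs_subspace Wd, Wd `<=` bs_dual_set,
           (forall f, bs_dual_set f -> exists w p, [/\ Wd w, perp p & f = w + p]),
           (forall f, Wd f -> perp f -> f = 0)
         & (forall w p, Wd w -> perp p -> bs_dual_norm (w + p) = bs_dual_norm w + bs_dual_norm p)]].
End NormedSub.

Definition bs_closed_unit_ball {R : realType} (Z : normedModType R) : set Z :=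
  [set z : Z | `|z| <= 1].
Arguments bs_closed_unit_ball {R} Z.

Section Operators.
Context {R : realType} {X Y : normedModType R}.


Definition bs_Lop : set (X -> Y) :=
  [set T | (forall (a : R) u v, T (a *: u + v) = a *: T u + T v)
        /\ exists M : R, forall x, `|T x| <= M * `|x|].

Definition bs_opnorm (T : X -> Y) : R :=
  sup [set r : R | exists x : X, `|x| <= 1 /\ r = `|T x|].

Definition bs_Kop : set (X -> Y) :=
  [set T | bs_Lop T /\ compact (closure (T @` bs_closed_unit_ball X))].

Definition bs_MT (T : X -> Y) : set X := [set x | `|x| = 1 /\ `|T x| = bs_opnorm T].
End Operators.

(* reflexivity: the canonical embedding X -> X** is onto *)
Definition bs_reflexive {R : realType} (X : normedModType R) : Prop :=
  forall Phi : (X -> R) -> R,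
    bs_dual_set (bs_dual_set [set: X] (fun v : X => `|v|)) (bs_dual_norm [set: X] (fun v : X => `|v|)) Phi ->
    exists x : X, forall f, bs_dual_set [set: X] (fun v : X => `|v|) f -> Phi f = f x.

(* Main.v *)
Require Import Defs.
From HB Require Import structures.
From mathcomp Require Import all_boot all_order all_algebra.
From mathcomp Require Import all_classical all_reals all_analysis.
Import Order.TTheory GRing.Theory Num.Theory.
Import numFieldNormedType.Exports.
Local Open Scope classical_set_scope.
Local Open Scope ring_scope.
From mathcomp Require Import lra.
Section HahnBanach.
Variables (R : realType) (X : normedModType R).

Definition hgood (G : set (X * R)) : Prop :=
  [/\ G (0, 0), (forall x a b, G (x, a) -> G (x, b) -> a = b),
      (forall x y a b (t : R), G (x, a) -> G (y, b) -> G (t *: x + y, t * a + b))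
    & (forall x a, G (x, a) -> a <= `|x|)].

Lemma hgood_scale G x a t : hgood G -> G (x,a) -> G (t *: x, t * a).
Proof. case=> G0 _ Gl _ Gxa; have := Gl _ _ _ _ t Gxa G0; by rewrite !addr0. Qed.

Lemma hgood_ext G z : hgood G -> (forall a, ~ G (z, a)) ->
  exists G', [/\ hgood G', G `<=` G' & exists c, G' (z, c)].
Proof.
move=> [G0 Gf Gl Gd] nz.
pose E := [set r | exists x a, G (x, a) /\ r = a - `|x - z|].
have key x a y b : G (x,a) -> G (y,b) -> a - `|x - z| <= `|y + z| - b.
  move=> Gxa Gyb.
  have := Gd _ _ (Gl _ _ _ _ 1 Gxa Gyb); rewrite scale1r mul1r => h.
  have h2 : `|x + y| <= `|x - z| + `|y + z|.
    by have := ler_normD (x - z) (y + z); rewrite addrACA addNr addr0.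
  lra.
have E0 : E !=set0 by exists (0 - `|0 - z|); exists 0, 0; split.
have Eub : ubound E (`|0 + z| - 0).
  by move=> r [x [a [Gxa ->]]]; exact: key.
have hs : has_sup E by split => //; exists (`|0 + z| - 0).
pose c := sup E.
have cle y b : G (y, b) -> c <= `|y + z| - b.
  by move=> Gyb; apply: ge_sup => // r [x [a [Gxa ->]]]; exact: key.
have cge x a : G (x, a) -> a - `|x - z| <= c.
  by move=> Gxa; apply: sup_upper_bound => //; exists x, a.
have Gsc x a t : G (x, a) -> G (t *: x, t * a).
  by move=> Gxa; have := Gl _ _ _ _ t Gxa G0; rewrite !addr0.
pose G' := [set p | exists x a t, G (x, a) /\ p = (x + t *: z, a + t * c)].
have GG' : G `<=` G'.
  by move=> [x a] Gxa; exists x, a, 0; split => //; rewrite scale0r mul0r !addr0.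
exists G'; split => //; last first.
  by exists c; exists 0, 0, 1; split => //; rewrite scale1r mul1r !add0r.
split.
- exact: GG'.
- move=> w a b [x1 [a1 [t1 [G1 [Ew Ea]]]]] [x2 [a2 [t2 [G2 [Ew2 Eb]]]]].
  have exx : x1 + t1 *: z = x2 + t2 *: z by rewrite -Ew -Ew2.
  have [et|net] := eqVneq t1 t2.
    subst t2; have ex : x1 = x2 by apply: (addIr (t1 *: z)); rewrite exx.
    by subst x2; rewrite Ea Eb (Gf _ _ _ G1 G2).
  exfalso; apply: (nz ((t1 - t2)^-1 * (-1 * a1 + a2))).
  have -> : z = (t1 - t2)^-1 *: (-1 *: x1 + x2).
    have e2 : -1 *: x1 + x2 = (t1 - t2) *: z.
      rewrite scaleN1r scalerBl.
      have -> : x2 = x1 + t1 *: z - t2 *: z by rewrite exx addrK.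
      by rewrite addrA addKr.
    by rewrite e2 scalerA mulVf ?scale1r // subr_eq0.
  by apply: Gsc; apply: Gl.
- move=> w1 w2 a b t [x1 [a1 [t1 [G1 [-> ->]]]]] [x2 [a2 [t2 [G2 [-> ->]]]]].
  exists (t *: x1 + x2), (t * a1 + a2), (t * t1 + t2); split; first exact: Gl.
  congr (_, _).
    by rewrite scalerDr scalerA scalerDl addrACA.
  by rewrite mulrDr mulrA mulrDl addrACA.
- move=> w a [x [b [t [Gxb [-> ->]]]]].
  have [t0|t0|->] := ltgtP t 0; last by rewrite scale0r mul0r !addr0; exact: Gd.
  +
    pose s := - t.
    have s0 : 0 < s by rewrite /s oppr_gt0.
    have := cge _ _ (Gsc _ _ s^-1 Gxb).
    have en : `|x + t *: z| = s * `|s^-1 *: x - z|.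
      have -> : x + t *: z = s *: (s^-1 *: x - z).
        by rewrite scalerBr scalerA mulfV ?gt_eqF // scale1r /s scaleNr opprK.
      by rewrite normrZ gtr0_norm.
    rewrite en => h.
    have h2 : s * (s^-1 * b - `|s^-1 *: x - z|) <= s * c.
      by rewrite ler_pM2l.
    rewrite mulrBr mulrA mulfV ?gt_eqF // mul1r in h2.
    rewrite /s in h2 *; lra.
  + have := cle _ _ (Gsc _ _ t^-1 Gxb).
    have en : `|x + t *: z| = t * `|t^-1 *: x + z|.
      have -> : x + t *: z = t *: (t^-1 *: x + z).
        by rewrite scalerDr scalerA mulfV ?gt_eqF // scale1r.
      by rewrite normrZ gtr0_norm.
    rewrite en => h.
    have h2 : t * c <= t * (`|t^-1 *: x + z| - t^-1 * b) by rewrite ler_pM2l.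
    rewrite mulrBr mulrA mulfV ?gt_eqF // mul1r in h2.
    lra.
Qed.


Lemma hb_point (v : X) : v != 0 -> exists phi : X -> R,
  [/\ (forall (a : R) u w, phi (a *: u + w) = a * phi u + phi w),
      (forall u, `|phi u| <= `|u|) & phi v = `|v|].
Proof.
move=> v0.
pose B := [set p : X * R | exists t : R, p = (t *: v, t * `|v|)].
have gB : hgood B.
  split.
  - by exists 0; rewrite scale0r mul0r.
  - move=> x a b [t1 [E1 ->]] [t2 [E2 ->]].
    have : (t1 - t2) *: v = 0 by rewrite scalerBl -E1 -E2 subrr.
    move/eqP; rewrite scaler_eq0 (negbTE v0) orbF subr_eq0 => /eqP -> //.
  - move=> x y a b t [t1 [-> ->]] [t2 [-> ->]].
    by exists (t * t1 + t2); rewrite scalerDl scalerA mulrDl mulrA.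
  - move=> x a [t [-> ->]]; rewrite normrZ.
    by apply: ler_wpM2r; [exact: normr_ge0 | exact: ler_norm].
pose P := fun S : set (X * R) => hgood (B `|` S).
have [A [PA maxA]] : exists A, P A /\ forall C, A `<` C -> ~ P C.
  apply: Zorn_bigcup => F FP tot.
  pose U := B `|` \bigcup_(S in F) S.
  have two p q : U p -> U q -> exists S,
      [/\ hgood (B `|` S), (B `|` S) p, (B `|` S) q & (B `|` S) `<=` U].
    have subU S : F S -> (B `|` S) `<=` U.
      by move=> FS w [Bw|Sw]; [left|right; exists S].
    move=> [Bp|[S1 FS1 S1p]] [Bq|[S2 FS2 S2q]].
    - exists set0; rewrite setU0; split => //.
      by move=> w Bw; left.
    - by exists S2; split => //; [exact: FP|left|right|exact: subU].
    - by exists S1; split => //; [exact: FP|right|left|exact: subU].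
    - have [s12|s21] := tot _ _ FS1 FS2.
        by exists S2; split => //; [exact: FP|right; exact: s12|right|exact: subU].
      by exists S1; split => //; [exact: FP|right|right; exact: s21|exact: subU].
  split.
  - by left; case: gB.
  - move=> x a b Ua Ub; have [S [[_ f _ _] Sa Sb _]] := two _ _ Ua Ub; exact: f Sa Sb.
  - move=> x y a b t Ua Ub; have [S [[_ _ l _] Sa Sb sub]] := two _ _ Ua Ub.
    exact/sub/(l _ _ _ _ _ Sa Sb).
  - move=> x a Ua; have [S [[_ _ _ d] Sa _ _]] := two _ _ Ua Ua; exact: d Sa.
pose G := B `|` A.
have gG : hgood G := PA.
have tot z : exists a, G (z, a).
  case: (pselect (exists a, G (z, a))) => // nz; exfalso.
  have nz' a : ~ G (z, a) by move=> Ga; apply: nz; exists a.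
  have [G' [gG' GG' [c G'c]]] := hgood_ext _ _ gG nz'.
  have e : B `|` G' = G'.
    by apply/seteqP; split => [w [Bw|//]|w Gw]; [apply: GG'; left|right].
  apply: (maxA G'); last by rewrite /P e.
  split; first by move=> w Aw; apply: GG'; right.
  by move=> sub; apply: (nz' c); right; apply: sub.
pose phi z := projT1 (cid (tot z)).
have Gphi z : G (z, phi z) by rewrite /phi; case: cid.
case: gG => G0 Gf Gl Gd.
exists phi; split.
- by move=> a u w; apply: (Gf (a *: u + w)) => //; apply: Gl.
- move=> u; rewrite ler_norml; apply/andP; split; last exact: Gd.
  have h1 := hgood_scale _ _ _ (-1) PA (Gphi u).
  have := Gf _ _ _ h1 (Gphi (-1 *: u)) => e.
  have := Gd _ _ (Gphi (-1 *: u)); rewrite -e normrZ normrN1 mul1r.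
  rewrite mulN1r; lra.
- apply: (Gf v) => //; left; exists 1; by rewrite scale1r mul1r.
Qed.

End HahnBanach.
Set Implicit Arguments. Unset Strict Implicit.
Section Aux.
Variable R : realType.

Lemma card_sig r (m : 'I_r -> nat) : #|{: {i : 'I_r & 'I_(m i)}}| = (\sum_(i < r) m i)%N.
Proof. rewrite card_tagged sumnE big_map big_enum /=; apply: eq_bigr => i _; by rewrite card_ord. Qed.

Lemma indep_fin (W : lmodType R) (K : finType) n (S : set W) (u : K -> W) :
  #|K| = n -> (forall k, bs_span S (u k)) ->
  (forall c : K -> R, \sum_k c k *: u k = 0 -> forall k, c k = 0) ->
  bs_dim_span_ge S n.
Proof.
move=> <- Su ind.
exists (fun k : 'I_#|K| => u (enum_val k)); split; first by move=> k; exact: Su.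
move=> c hc k.
pose c' := fun q : K => c (enum_rank q).
have := ind c' _ (enum_val k); rewrite /c' enum_valK; apply.
rewrite (reindex (fun k : 'I_#|K| => enum_val k)) /=; last by apply: onW_bij; exact: enum_val_bij.
by rewrite -[RHS]hc; apply: eq_bigr => j _; rewrite enum_valK.
Qed.

Lemma lin_facts (U W : lmodType R) (f : U -> W) :
  (forall (a : R) u v, f (a *: u + v) = a *: f u + f v) ->
  [/\ f 0 = 0, forall (a : R) u, f (a *: u) = a *: f u & forall u v, f (u + v) = f u + f v].
Proof.
move=> fl.
have f0 : f 0 = 0.
  have := fl 1 0 0; rewrite scale1r addr0 scale1r => h.
  by apply: (addrI (f 0)); rewrite addr0 -h.
split => //.
- by move=> a u; have := fl a u 0; rewrite addr0 f0 addr0.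
- by move=> u v; have := fl 1 u v; rewrite !scale1r.
Qed.

Lemma lin_sum (U : lmodType R) (f : U -> R) n (a : 'I_n -> R) (z : 'I_n -> U) :
  (forall (a : R) u v, f (a *: u + v) = a * f u + f v) ->
  f (\sum_(i < n) a i *: z i) = \sum_(i < n) a i * f (z i).
Proof.
move=> fl.
have f0 : f 0 = 0.
  have := fl 1 0 0; rewrite scale1r addr0 mul1r => h.
  by apply: (addrI (f 0)); rewrite addr0 -h.
elim/big_rec2: _ => [|i s1 s2 _ <-]; first exact: f0.
exact: fl.
Qed.

Lemma sup_bound (Z W : normedModType R) (f : Z -> W) M :
  (forall (a : R) u, `|f (a *: u)| = `|a| * `|f u|) -> (forall x, `|f x| <= M * `|x|) ->
  has_sup [set r | exists x, `|x| <= 1 /\ r = `|f x|] /\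
  forall x, `|f x| <= sup [set r | exists x, `|x| <= 1 /\ r = `|f x|] * `|x|.
Proof.
move=> fh fM.
set E := [set r | exists x, _].
have hs : has_sup E.
  split; first by exists `|f 0|; exists 0; rewrite normr0 ler01.
  exists `|M| => r [x [x1 ->]].
  apply: (le_trans (fM x)); apply: (le_trans (y := `|M| * `|x|)).
    by apply: ler_wpM2r; [exact: normr_ge0|exact: ler_norm].
  by apply: ler_piMr.
split => // x.
have [->|x0] := eqVneq x 0.
  have := fh 0 0; rewrite scale0r normr0 mul0r => ->; by rewrite normr0 mulr0.
have nx : 0 < `|x| by rewrite normr_gt0.
have Eu : E `|f (`|x|^-1 *: x)|.
  by exists (`|x|^-1 *: x); split => //; rewrite normfZV.
have h := sup_upper_bound hs Eu.
rewrite fh normfV normr_id in h.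
rewrite mulrC -ler_pdivrMl //; by rewrite mulrC.
Qed.

End Aux.
Section Ops.
Variables (R : realType) (X Y : normedModType R).

Lemma Lop_lin (u v : X -> Y) (a : R) : bs_Lop u -> bs_Lop v -> bs_Lop (a *: u + v).
Proof.
move=> [ul [Mu uM]] [vl [Mv vM]]; split.
  move=> b w w'.
  change (a *: u (b *: w + w') + v (b *: w + w') =
    b *: (a *: u w + v w) + (a *: u w' + v w')).
  rewrite ul vl !scalerDr !scalerA [a * b]mulrC -!scalerA.
  by rewrite addrACA -scalerDr.
exists (`|a| * Mu + Mv) => w.
change (`|a *: u w + v w| <= (`|a| * Mu + Mv) * `|w|).
apply: (le_trans (ler_normD _ _)); rewrite normrZ mulrDl -mulrA.
apply: lerD => //; apply: ler_wpM2l => //; exact: normr_ge0.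
Qed.

Lemma Lop_bound (S : X -> Y) x : bs_Lop S -> `|S x| <= bs_opnorm S * `|x|.
Proof.
move=> [Sl [M SM]].
have [_ Sh _] := lin_facts Sl.
have fh : forall (a : R) u, `|S (a *: u)| = `|a| * `|S u|.
  by move=> a u; rewrite Sh normrZ.
by have [_] := sup_bound fh SM; apply.
Qed.

Lemma dual_bound (h : Y -> R) :
  bs_dual_set [set: Y] (fun v : Y => `|v|) h ->
  forall y, `|h y| <= bs_dual_norm [set: Y] (fun v : Y => `|v|) h * `|y|.
Proof.
move=> [hl [[M hM] _]].
have hl' : forall (a : R) u v, h (a *: u + v) = a * h u + h v by move=> *; exact: hl.
have h0 : h 0 = 0.
  have := hl' 1 0 0; rewrite scale1r addr0 mul1r => e.
  by apply: (addrI (h 0)); rewrite addr0 -e.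
have hh a u : h (a *: u) = a * h u by have := hl' a u 0; rewrite addr0 h0 addr0.
rewrite /bs_dual_norm.
have -> : [set r | exists v, [/\ [set: Y] v, `|v| <= 1 & r = `|h v|]] =
          [set r | exists x, `|x| <= 1 /\ r = `|h x|].
  apply/seteqP; split => r [v].
    by case=> _ v1 ->; exists v.
  by case=> v1 ->; exists v.
have fh : forall (a : R) u, `|h (a *: u)| = `|a| * `|h u|.
  by move=> a u; rewrite hh normrM.
by have [_] := sup_bound (W := R) fh (fun v => hM v I); apply.
Qed.

Lemma rank1_Lop (phi : X -> R) (y : Y) :
  (forall (a : R) u w, phi (a *: u + w) = a * phi u + phi w) ->
  (forall u, `|phi u| <= `|u|) -> bs_Lop (fun w => phi w *: y).
Proof.
move=> pl pb; split.
  by move=> a u w; rewrite pl scalerDl scalerA.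
exists `|y| => w; rewrite normrZ mulrC; apply: ler_wpM2l => //; exact: normr_ge0.
Qed.

Definition Phi (xi : X) (g : Y -> R) : (X -> Y) -> R :=
  fun S => if `[< bs_Lop S >] then g (S xi) else 0.

Lemma Phi_J (T : X -> Y) xi h : bs_Lop T -> bs_opnorm T = 1 -> `|xi| = 1 ->
  bs_Jset [set: Y] (fun v : Y => `|v|) (T xi) h ->
  bs_Jset (@bs_Lop R X Y) bs_opnorm T (Phi xi h).
Proof.
move=> TL Tn xn [hd [hn hT]].
have hb := dual_bound hd; rewrite hn in hb.
have [hl _] := hd.
have bnd S : bs_Lop S -> `|Phi xi h S| <= bs_opnorm S.
  move=> SL; rewrite /Phi asboolT //.
  apply: (le_trans (hb _)); rewrite mul1r.
  by have := Lop_bound xi SL; rewrite xn mulr1.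
have PT : Phi xi h T = 1 by rewrite /Phi asboolT.
split; [split; [|split]|split].
- move=> a u v uL vL; rewrite /Phi !asboolT //; last exact: Lop_lin.
  exact: hl.
- by exists 1 => v vL; rewrite mul1r; exact: bnd.
- by move=> v vL; rewrite /Phi asboolF.
- rewrite /bs_dual_norm.
  set E := [set r | _].
  have E1 : E 1.
    by exists T; split => //; [rewrite Tn|rewrite PT normr1].
  have ub : ubound E 1.
    move=> r; rewrite /E /= => -[S [SL S1 ->]]; exact: (le_trans (bnd _ SL)).
  apply/le_anti/andP; split; first by apply: ge_sup => //; exists 1.
  apply: sup_upper_bound => //; split => //; by exists 1.
- exact: PT.
Qed.

Lemma span_lin (z : Y) (g : Y -> R) :
  bs_span (bs_Jset [set: Y] (fun v : Y => `|v|) z) g ->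
  forall (a : R) u v, g (a *: u + v) = a * g u + g v.
Proof.
move=> [n [c [h [hJ ->]]]] a u v.
rewrite !fct_sumE /= mulr_sumr -big_split /=; apply: eq_bigr => i _.
have [[hl _] _] := hJ i.
have sm : forall p q : R, p *: q = p * q by [].
by rewrite /GRing.scale /= hl // -!/(GRing.scale) !sm mulrDr mulrCA.
Qed.

Lemma Phi_span (T : X -> Y) xi g : bs_Lop T -> bs_opnorm T = 1 -> `|xi| = 1 ->
  bs_span (bs_Jset [set: Y] (fun v : Y => `|v|) (T xi)) g ->
  bs_span (bs_Jset (@bs_Lop R X Y) bs_opnorm T) (Phi xi g).
Proof.
move=> TL Tn xn [n [c [h [hJ ->]]]].
exists n, c, (fun k => Phi xi (h k)); split.
  by move=> k; apply: Phi_J.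
apply/funext => S; rewrite /Phi !fct_sumE.
case: (pselect (bs_Lop S)) => SL.
  by rewrite asboolT //; apply: eq_bigr => i _; rewrite /GRing.scale /= asboolT.
rewrite asboolF //; apply/esym; apply: big1 => i _.
by rewrite /GRing.scale /= asboolF // -[X in X = _]/(c i *: 0) scaler0.
Qed.

End Ops.
Lemma lin_hom (R : realType) (U : lmodType R) (f : U -> R) :
  (forall (a : R) u v, f (a *: u + v) = a * f u + f v) ->
  forall (a : R) u, f (a *: u) = a * f u.
Proof.
move=> fl a u.
have f0 : f 0 = 0.
  have := fl 1 0 0; rewrite scale1r addr0 mul1r => h.
  by apply: (addrI (f 0)); rewrite addr0 -h.
by have := fl a u 0; rewrite addr0 f0 addr0.
Qed.

Theorem mainTheorem3 (R : realType) (X Y : completeNormedModType R)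
  (T : X -> Y) (r : nat) (x : 'I_r -> X) (m : 'I_r -> nat) :
  bs_reflexive X ->
  bs_Lop T -> bs_opnorm T = 1 ->
  bs_M_ideal (@bs_Lop R X Y) bs_opnorm (@bs_Kop R X Y) ->
  bs_dist_to bs_opnorm T (@bs_Kop R X Y) < 1 ->
  (forall i, (bs_MT T `&` bs_ext (bs_closed_unit_ball X)) (x i)) ->
  bs_lin_indep x ->
  (forall y, (bs_MT T `&` bs_ext (bs_closed_unit_ball X)) y -> ~ bs_lin_indep (bs_extend x y)) ->
  (forall i, bs_k_smooth [set: Y] (fun v : Y => `|v|) (T (x i)) (m i)) ->
  bs_dim_span_ge (bs_Jset (@bs_Lop R X Y) bs_opnorm T) (\sum_(i < r) m i)%N.
Proof.
move=> _ TL Tn _ _ xM xind _ hsm.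
have xn i : `|x i| = 1 by have [[xn1 _] _] := xM i.
have gex i : bs_dim_span_ge (bs_Jset [set: Y] (fun v : Y => `|v|) (T (x i))) (m i).
  by have [_ [_ []]] := hsm i.
pose gf i := projT1 (cid (gex i)).
have gfP i : (forall j, bs_span (bs_Jset [set: Y] (fun v : Y => `|v|) (T (x i))) (gf i j))
    /\ bs_lin_indep (gf i).
  by rewrite /gf; case: cid.
pose K := {i : 'I_r & 'I_(m i)}.
pose u (p : K) := Phi (x (tag p)) (gf (tag p) (tagged p)).
apply: (@indep_fin R _ K _ _ u); first exact: card_sig.
  by move=> [i j]; apply: Phi_span => //; exact: (gfP i).1.
move=> c hc.
have sm : forall p q : R, p *: q = p * q by [].
pose G i y := \sum_(j < m i) c (Tagged (fun i => 'I_(m i)) j) * gf i j y.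
have hcol y (phi : X -> R) :
    (forall (a : R) u w, phi (a *: u + w) = a * phi u + phi w) ->
    (forall u, `|phi u| <= `|u|) -> \sum_(i < r) phi (x i) * G i y = 0.
  move=> pl pb.
  pose S := fun w => phi w *: y.
  have SL : bs_Lop S by exact: rank1_Lop.
  have := congr1 (fun F => F S) hc; rewrite fct_sumE /=.
  have -> : (0 : (X -> Y) -> R) S = 0 by [].
  have -> : \sum_(p : K) (c p *: u p) S = \sum_(p : K) c p * u p S.
    by apply: eq_bigr.
  move=> e; apply: (etrans _ e).
  transitivity (\sum_(i < r) \sum_(j < m i)
       c (Tagged (fun i => 'I_(m i)) j) * (phi (x i) * gf i j y)).
    by apply: eq_bigr => i _; rewrite /G mulr_sumr; apply: eq_bigr => j _; rewrite mulrCA.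
  rewrite (sig_big_dep (fun _ => true) (fun _ _ => true) (fun i (j : 'I_(m i)) => c (Tagged (fun i => 'I_(m i)) j) * (phi (x i) * gf i j y))) /=.
  apply: eq_bigr => -[i j] _ /=.
  rewrite /u /Phi asboolT //= /S.
  by rewrite (lin_hom (span_lin ((gfP i).1 j))).
have Gz y i : G i y = 0.
  pose v := \sum_(i < r) G i y *: x i.
  have v0 : v = 0.
    apply/eqP; apply/negPn/negP => nv.
    have [phi [pl pb pv]] := @hb_point _ _ _ nv.
    have := hcol y phi pl pb.
    have -> : \sum_(k < r) phi (x k) * G k y = \sum_(k < r) G k y * phi (x k).
      by apply: eq_bigr => k _; rewrite mulrC.
    rewrite -(lin_sum _ _ pl) -/v pv => /eqP; rewrite normr_eq0; exact/negP.
  exact: xind v0 i.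
move=> [i j].
have := (gfP i).2 (fun j => c (Tagged (fun i => 'I_(m i)) j)); apply.
apply/funext => y; rewrite fct_sumE.
by rewrite -[RHS](Gz y i).
Qed.
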